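(* Let $Z_{C_2}$ be the set of $\boldsymbol{x}\in\mathbb{R}^n$ for which there exist $\lambda\ge0$, $\alpha_t\ge0$, $s_i\ge0$, $\boldsymbol{z}_{it}\in\mathbb{R}^m$ ($i\in[N],t\in[T]$) with $\lambda\delta+\frac1N\sum_{i=1}^Ns_i\le\epsilon$, $G_{f_t}(\boldsymbol{z}_{it},\alpha_t,\boldsymbol{x})+1-\boldsymbol{z}_{it}^{\top}\boldsymbol{\zeta}^i-s_i\le0$ and $\|\boldsymbol{z}_{it}\|_*\le\lambda$ for all $i\in[N],t\in[T]$. Let $\tilde Z_{C_2}$ be the set of $\boldsymbol{x}\in\mathbb{R}^n$ for which there exist $\alpha_t>0$, $q_{it}\ge0$ and $\boldsymbol{v}_{it}\in\mathbb{R}^m$ ($i\in[N],t\in[T]$) such that for all $i\in[N],t\in[T]$: $$\|\boldsymbol{v}_{it}\|_*\delta+\frac1N\sum_{j=1}^Nq_{jt}\le\epsilon\alpha_t,\qquad G_{f_t}(\boldsymbol{v}_{it},1,\boldsymbol{x})+\alpha_t-\boldsymbol{v}_{it}^{\top}\boldsymbol{\zeta}^i-q_{it}\le0.$$ Then $Z_{C_2}\subseteq\tilde Z_{C_2}$, and $\tilde Z_{C_2}$ is a convex set.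
   Context: Here $G_{f_t}(\boldsymbol{z},\alpha,\boldsymbol{x})=\sup_{\boldsymbol{\xi}\in\Xi}[\boldsymbol{z}^{\top}\boldsymbol{\xi}-\alpha f_t(\boldsymbol{x},\boldsymbol{\xi})]$. Setting: $\epsilon\in(0,1)$, $\delta>0$, $[T]=\{1,\dots,T\}$; $\Xi\subseteq\mathbb{R}^m$ nonempty closed convex; each $f_t:\mathbb{R}^n\times\Xi\to\mathbb{R}$ convex continuous in $\boldsymbol{\xi}$ for fixed $\boldsymbol{x}$ and concave continuous in $\boldsymbol{x}$ for fixed $\boldsymbol{\xi}$; $\boldsymbol{\zeta}^1,\dots,\boldsymbol{\zeta}^N\in\Xi$ given samples; $\|\cdot\|_*$ is the dual norm of a norm $\|\cdot\|$ on $\mathbb{R}^m$. *)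

(* Defs.v *)
From HB Require Import structures.
From mathcomp Require Import all_boot all_order all_algebra.
From mathcomp Require Import all_classical all_reals all_analysis.
Set Implicit Arguments. Unset Strict Implicit. Unset Printing Implicit Defensive.
Import Order.TTheory GRing.Theory Num.Theory.
Import numFieldNormedType.Exports.
Local Open Scope classical_set_scope.
Local Open Scope ring_scope.

Definition dotv {R : realType} {k : nat} (z xi : 'rV[R]_k) : R :=
  \sum_(j < k) z 0 j * xi 0 j.

Definition is_norm {R : realType} {k : nat} (nrm : 'rV[R]_k -> R) : Prop :=
  [/\ forall x, 0 <= nrm x,
      forall x, nrm x = 0 -> x = 0,
      forall (c : R) x, nrm (c *: x) = `|c| * nrm x &
      forall x y, nrm (x + y) <= nrm x + nrm y].

Definition dual_norm {R : realType} {k : nat} (nrm : 'rV[R]_k -> R)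
  (z : 'rV[R]_k) : R :=
  sup [set dotv z xi | xi in [set xi | nrm xi <= 1]].

Definition Gf {R : realType} {n m : nat} (Xi : set 'rV[R]_m)
  (f : 'rV[R]_n -> 'rV[R]_m -> R) (z : 'rV[R]_m) (alpha : R) (x : 'rV[R]_n)
  : \bar R :=
  ereal_sup [set (dotv z xi - alpha * f x xi)%:E | xi in Xi].

Definition convex_on {R : realType} {k : nat} (D : set 'rV[R]_k)
  (g : 'rV[R]_k -> R) : Prop :=
  forall a b, D a -> D b -> forall l : R, 0 <= l <= 1 ->
    g (l *: a + (1 - l) *: b) <= l * g a + (1 - l) * g b.

Definition concave_on {R : realType} {k : nat} (D : set 'rV[R]_k)
  (g : 'rV[R]_k -> R) : Prop :=
  forall a b, D a -> D b -> forall l : R, 0 <= l <= 1 ->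
    l * g a + (1 - l) * g b <= g (l *: a + (1 - l) *: b).

Definition Z_C2 {R : realType} {n m N T : nat} (nrm : 'rV[R]_m -> R)
  (Xi : set 'rV[R]_m) (f : 'I_T -> 'rV[R]_n -> 'rV[R]_m -> R)
  (zeta : 'I_N -> 'rV[R]_m) (eps delta : R) : set 'rV[R]_n :=
  [set x | exists (lam : R) (alpha : 'I_T -> R) (s : 'I_N -> R)
              (z : 'I_N -> 'I_T -> 'rV[R]_m),
     [/\ 0 <= lam, (forall t, 0 <= alpha t), (forall i, 0 <= s i),
         lam * delta + N%:R^-1 * (\sum_(i < N) s i) <= eps &
         forall i t,
           (Gf Xi (f t) (z i t) (alpha t) x
              + (1 - dotv (z i t) (zeta i) - s i)%:E <= 0)%E
           /\ dual_norm nrm (z i t) <= lam]].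

Definition Zt_C2 {R : realType} {n m N T : nat} (nrm : 'rV[R]_m -> R)
  (Xi : set 'rV[R]_m) (f : 'I_T -> 'rV[R]_n -> 'rV[R]_m -> R)
  (zeta : 'I_N -> 'rV[R]_m) (eps delta : R) : set 'rV[R]_n :=
  [set x | exists (alpha : 'I_T -> R) (q : 'I_N -> 'I_T -> R)
              (v : 'I_N -> 'I_T -> 'rV[R]_m),
     [/\ (forall t, 0 < alpha t), (forall i t, 0 <= q i t) &
         forall i t,
           dual_norm nrm (v i t) * delta + N%:R^-1 * (\sum_(j < N) q j t)
             <= eps * alpha t
           /\ (Gf Xi (f t) (v i t) 1 x
                 + (alpha t - dotv (v i t) (zeta i) - q i t)%:E <= 0)%E]].

(* Main.v *)
Require Import Defs.
From HB Require Import structures.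
From mathcomp Require Import all_boot all_order all_algebra.
From mathcomp Require Import all_classical all_reals all_analysis.
From mathcomp Require Import ring lra.
Import Order.TTheory GRing.Theory Num.Theory.
Import numFieldNormedType.Exports.
Local Open Scope classical_set_scope.
Local Open Scope ring_scope.
Set Implicit Arguments. Unset Strict Implicit.

Section NormLemmas.
Variables (R : realType) (k : nat) (nrm : 'rV[R]_k -> R).
Hypothesis hn : is_norm nrm.

Lemma nrm0 : nrm 0 = 0.
Proof. case: hn => _ _ hZ _. by rewrite -(scale0r (0 : 'rV[R]_k)) hZ normr0 mul0r. Qed.

Lemma nrmN x : nrm (- x) = nrm x.
Proof. case: hn => _ _ hZ _. by rewrite -scaleN1r hZ normrN normr1 mul1r. Qed.

Lemma nrm_sum (F : 'I_k -> 'rV[R]_k) : nrm (\sum_j F j) <= \sum_j nrm (F j).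
Proof.
case: hn => _ _ _ hD.
apply: (big_ind2 (fun a b => nrm a <= b)); first by rewrite nrm0.
  by move=> x1 x2 y1 y2 h1 h2; apply: le_trans (hD _ _) (lerD h1 h2).
by [].
Qed.

Lemma entry_le (x : 'rV[R]_k) j : `|x 0 j| <= `|x|.
Proof.
have /mapP[j' Hj ->] : `|x 0 j| \in [seq `|x y.1 y.2| | y : 'I_1 * 'I_k].
  by apply/mapP; exists (0, j) => //=; rewrite mem_enum.
by rewrite [leRHS]/Num.norm /= mx_normrE; apply/bigmax_geP; right => /=; exists j'.
Qed.

Definition Kn := \sum_(j < k) nrm (delta_mx 0 j).

Lemma nrm_upper x : nrm x <= Kn * `|x|.
Proof.
case: hn => h0 _ hZ _.
rewrite {1}(row_sum_delta x); apply: le_trans (nrm_sum _) _.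
rewrite /Kn mulr_suml; apply: ler_sum => j _; rewrite hZ mulrC.
by apply: ler_wpM2l => //; exact: entry_le.
Qed.

Lemma Kn_ge0 : 0 <= Kn.
Proof. by case: hn => h0 _ _ _; apply: sumr_ge0. Qed.

Lemma nrm_cont : continuous nrm.
Proof.
case: hn => h0 _ hZ hD.
move=> x; apply/(@cvgrPdist_lt _ _ _ (nbhs x) (nbhs_filter x)) => e e0.
have he : 0 < e / (Kn + 1) by apply: divr_gt0 => //; have := Kn_ge0; lra.
near=> t.
have ht : `|x - t| < e / (Kn + 1).
  near: t; apply: (@cvgr_dist_lt _ _ _ (nbhs x) (nbhs_filter x) id x) => //.
have h1 : nrm x <= nrm t + nrm (x - t).
  by have := hD t (x - t); rewrite addrC subrK.
have h2 : nrm t <= nrm x + nrm (t - x).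
  by have := hD x (t - x); rewrite addrC subrK.
have h3 : nrm (t - x) = nrm (x - t) by rewrite -opprB nrmN.
have h4 := nrm_upper (x - t).
have h5 : Kn * `|x - t| <= Kn * (e / (Kn + 1)) by apply: ler_wpM2l; [exact: Kn_ge0| exact: ltW].
have h6 : Kn * (e / (Kn + 1)) < e.
  rewrite mulrA ltr_pdivrMr; last by have := Kn_ge0; lra.
  have := Kn_ge0; nra.
rewrite ltr_norml; apply/andP; split; lra.
Unshelve. all: by end_near.
Qed.

End NormLemmas.

Section NormLemmas2.
Variables (R : realType) (k : nat) (nrm : 'rV[R]_k -> R).
Hypothesis hn : is_norm nrm.

Lemma nrm_lower : exists2 c, 0 < c & forall x, c * `|x| <= nrm x.
Proof.
have [h0 h0' hZ hD] := hn.
pose S := (fun x : 'rV[R]_k => `|x|) @^-1` [set (1:R)].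
have Sx x : x != 0 -> S (`|x|^-1 *: x).
  move=> x0; rewrite /S /= normrZ normrV ?unitfE ?normr_eq0 // normr_id mulVf //.
  by rewrite normr_eq0.
have key c : (forall y, S y -> c <= nrm y) -> forall x, c * `|x| <= nrm x.
  move=> hc x; have [->|x0] := eqVneq x 0; first by rewrite normr0 mulr0 h0.
  have := hc _ (Sx x x0); rewrite hZ ger0_norm ?invr_ge0 // => h.
  have nx : 0 < `|x| by rewrite normr_gt0.
  by rewrite -ler_pdivlMr // mulrC.
have [[y0 Sy0]|S0] := pselect (S !=set0); last first.
  exists 1 => //; apply: key => y Sy; by exfalso; apply: S0; exists y.
have cS : compact S.
  apply: bounded_closed_compact.
    exists 1; split; first exact: num_real.
    by move=> M hM x /= ->; exact: ltW.
  apply: preimage_closed; last exact: closed_eq.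
  by move=> y _; exact: norm_continuous.
have [c cS' hc] := compact_EVT_min (ex_intro _ y0 Sy0) cS
  (continuous_subspaceT (nrm_cont hn)).
rewrite inE in cS'.
exists (nrm c).
  rewrite lt_neqAle h0 andbT; apply/eqP => /esym /h0' c0.
  by move: cS'; rewrite /S /= c0 normr0 => /eqP; rewrite eq_sym oner_eq0.
by apply: key => y Sy; apply: hc; rewrite inE.
Qed.

Definition dset (v : 'rV[R]_k) := [set dotv v xi | xi in [set xi | nrm xi <= 1]].

Lemma dual_has_sup v : has_sup (dset v).
Proof.
have [h0 h0' hZ hD] := hn.
have [c c0 hc] := nrm_lower.
split; first by exists (dotv v 0), 0 => //=; rewrite (nrm0 hn).
exists ((\sum_j `|v 0 j|) / c) => _ [xi /= hxi <-].
apply: (le_trans (ler_norm _)); rewrite /dotv.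
apply: (le_trans (ler_norm_sum _ _ _)).
have hx : `|xi| <= c^-1 by rewrite -(ler_pM2l c0) mulfV ?gt_eqF //; apply: le_trans (hc xi) hxi.
rewrite mulr_suml; apply: ler_sum => j _; rewrite normrM.
apply: ler_wpM2l => //; apply: le_trans hx; exact: entry_le.
Qed.

Lemma dn_ub v xi : nrm xi <= 1 -> dotv v xi <= dual_norm nrm v.
Proof. move=> h; apply: sup_upper_bound; [exact: dual_has_sup| by exists xi]. Qed.

Lemma dn_le v b : (forall xi, nrm xi <= 1 -> dotv v xi <= b) -> dual_norm nrm v <= b.
Proof.
move=> h; apply: sup_le_ub; first by exists (dotv v 0), 0 => //=; rewrite (nrm0 hn).
by move=> _ [xi /= hxi <-]; exact: h.
Qed.

End NormLemmas2.

Lemma dotvZ (R : realType) k (c : R) (v xi : 'rV[R]_k) :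
  dotv (c *: v) xi = c * dotv v xi.
Proof. by rewrite /dotv mulr_sumr; apply: eq_bigr => j _; rewrite mxE mulrA. Qed.

Lemma dotvD (R : realType) k (v w xi : 'rV[R]_k) :
  dotv (v + w) xi = dotv v xi + dotv w xi.
Proof. by rewrite /dotv -big_split; apply: eq_bigr => j _; rewrite mxE mulrDl. Qed.

Lemma dn_conv (R : realType) k (nrm : 'rV[R]_k -> R) (hn : is_norm nrm)
  (a b : R) v w : 0 <= a -> 0 <= b ->
  dual_norm nrm (a *: v + b *: w) <= a * dual_norm nrm v + b * dual_norm nrm w.
Proof.
move=> a0 b0; apply: dn_le => // xi hxi.
rewrite dotvD !dotvZ; apply: lerD; apply: ler_wpM2l => //; exact: dn_ub.
Qed.

Lemma dn_scale (R : realType) k (nrm : 'rV[R]_k -> R) (hn : is_norm nrm)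
  (a : R) v : 0 <= a -> dual_norm nrm (a *: v) <= a * dual_norm nrm v.
Proof.
move=> a0; apply: dn_le => // xi hxi.
rewrite dotvZ; apply: ler_wpM2l => //; exact: dn_ub.
Qed.

Lemma Gf_leP (R : realType) n m (Xi : set 'rV[R]_m) (g : 'rV[R]_n -> 'rV[R]_m -> R)
  v a x (c : R) :
  (Gf Xi g v a x + c%:E <= 0)%E <-> forall xi, Xi xi -> dotv v xi - a * g x xi + c <= 0.
Proof.
split.
  move=> h xi Xxi.
  have h1 : ((dotv v xi - a * g x xi)%:E <= Gf Xi g v a x)%E.
    by apply: ereal_sup_ubound; exists xi.
  rewrite -lee_fin EFinD; apply: le_trans h; exact: leeD2r.
move=> h.
have h1 : (Gf Xi g v a x <= (- c)%:E)%E.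
  apply: ge_ereal_sup => _ [xi Xxi <-]; rewrite lee_fin.
  have := h xi Xxi; lra.
apply: le_trans (leeD2r _ h1) _; by rewrite -EFinD addNr.
Qed.

Unset Implicit Arguments. Set Strict Implicit.

Theorem theorem2 (R : realType) (n m N T : nat)
  (nrm : 'rV[R]_m -> R) (Xi : set 'rV[R]_m)
  (f : 'I_T -> 'rV[R]_n -> 'rV[R]_m -> R)
  (zeta : 'I_N -> 'rV[R]_m) (eps delta : R) :
  is_norm nrm ->
  0 < eps < 1 -> 0 < delta -> (0 < N)%N ->
  Xi !=set0 -> closed Xi -> convex_set Xi ->
  (forall t x, convex_on Xi (f t x)) ->
  (forall t x, {within Xi, continuous (f t x)}) ->
  (forall t xi, Xi xi -> concave_on setT (fun x => f t x xi)) ->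
  (forall t xi, Xi xi -> continuous (fun x => f t x xi)) ->
  (forall i, Xi (zeta i)) ->
  Z_C2 nrm Xi f zeta eps delta `<=` Zt_C2 nrm Xi f zeta eps delta
  /\ convex_set (Zt_C2 nrm Xi f zeta eps delta).
Proof.
move=> hn /andP[eps0 eps1] delta0 N0 _ _ _ _ _ hconc _ hzeta.
have hN : 0 < N%:R :> R by rewrite ltr0n.
split.
  move=> x [lam [alpha [s [z [lam0 al0 s0 hsum hz]]]]].
  have apos t : 0 < alpha t.
    rewrite lt_neqAle al0 andbT; apply/eqP => a0.
    have hs i : 1 <= s i.
      have [h _] := hz i t; have := (Gf_leP _ _ _ _ _ _).1 h (zeta i) (hzeta i).
      rewrite -a0 mul0r; lra.
    have hS : N%:R <= \sum_i s i.
      have -> : N%:R = \sum_(i < N) (1:R) by rewrite sumr_const card_ord.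
      by apply: ler_sum => i _.
    have : N%:R^-1 * N%:R <= N%:R^-1 * \sum_i s i.
      by apply: ler_wpM2l => //; rewrite invr_ge0 ltW.
    rewrite mulVf ?gt_eqF // => h1.
    have : 0 <= lam * delta by apply: mulr_ge0 => //; exact: ltW.
    lra.
  exists (fun t => (alpha t)^-1), (fun i t => s i / alpha t),
    (fun i t => (alpha t)^-1 *: z i t).
  split.
  - by move=> t; rewrite invr_gt0.
  - by move=> i t; apply: divr_ge0 => //; exact: ltW.
  move=> i t; have [hG hD] := hz i t.
  have ia0 : 0 < (alpha t)^-1 by rewrite invr_gt0.
  have hia : (alpha t)^-1 * alpha t = 1 by rewrite mulVf ?gt_eqF.
  split.
    have d1 := dn_scale hn (z i t) (ltW ia0).
    have d2 : dual_norm nrm ((alpha t)^-1 *: z i t) * delta <= (alpha t)^-1 * lam * delta.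
      apply: ler_wpM2r; first exact: ltW.
      apply: le_trans d1 _; rewrite ler_wpM2l //; exact: ltW.
    have d3 : (alpha t)^-1 * (lam * delta + N%:R^-1 * \sum_(i < N) s i) <= (alpha t)^-1 * eps.
      by apply: ler_wpM2l => //; exact: ltW.
    rewrite -mulr_suml.
    lra.
  apply/Gf_leP => xi Xxi.
  have := (Gf_leP _ _ _ _ _ _).1 hG xi Xxi => k1.
  have k2 : (alpha t)^-1 * (dotv (z i t) xi - alpha t * f t x xi + (1 - dotv (z i t) (zeta i) - s i)) <= 0.
    by apply: mulr_ge0_le0 => //; exact: ltW.
  rewrite !dotvZ.
  have -> : 1 * f t x xi = (alpha t)^-1 * (alpha t * f t x xi) by rewrite mulrA hia.
  lra.
move=> x y l; rewrite !inE => -[a1 [q1 [v1 [a1p q1p h1]]]] -[a2 [q2 [v2 [a2p q2p h2]]]].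
change (Zt_C2 nrm Xi f zeta eps delta (l%:num *: (x:'rV[R]_n) + (1 - l%:num) *: (y:'rV[R]_n))).
have p0 : 0 <= l%:num by [].
have p1 : l%:num <= 1 by [].
move: (l%:num) p0 p1 => p p0 p1.
exists (fun t => p * a1 t + (1 - p) * a2 t), (fun i t => p * q1 i t + (1 - p) * q2 i t),
  (fun i t => p *: v1 i t + (1 - p) *: v2 i t).
have p0' : 0 <= 1 - p by lra.
split.
- move=> t; have := a1p t; have := a2p t; nra.
- move=> i t; have := q1p i t; have := q2p i t; nra.
move=> i t; have [c1 g1] := h1 i t; have [c2 g2] := h2 i t.
split.
  have d1 := dn_conv hn (v1 i t) (v2 i t) p0 p0'.
  have d2 := ler_wpM2r (ltW delta0) d1.
  have e1 := ler_wpM2l p0 c1.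
  have e2 := ler_wpM2l p0' c2.
  rewrite big_split /= -!mulr_sumr.
  lra.
apply/Gf_leP => xi Xxi.
have k1 := (Gf_leP _ _ _ _ _ _).1 g1 xi Xxi.
have k2 := (Gf_leP _ _ _ _ _ _).1 g2 xi Xxi.
have e1 := mulr_ge0_le0 p0 k1.
have e2 := mulr_ge0_le0 p0' k2.
have hc := hconc t xi Xxi x y I I p (introT andP (conj p0 p1)).
rewrite !dotvD !dotvZ.
lra.
Qed.
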